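(* Let $X\in\mathbb{R}^d$, $Y\in\mathbb{R}$, $H\in\mathbb{R}^q$, $I\in\mathbb{R}^m$ be generated by the linear structural causal model $$X := BX + AI + h(H,\epsilon^X),\qquad Y := X^\top\beta^* + g(H,\epsilon^Y),$$ where $B\in\mathbb{R}^{d\times d}$ with $\operatorname{Id}-B$ invertible, $A\in\mathbb{R}^{d\times m}$, $\beta^*\in\mathbb{R}^d$, $h,g$ are arbitrary measurable functions, $I,H,\epsilon^X,\epsilon^Y$ are jointly independent, and $\operatorname{Cov}[I]$ is invertible. Let $C:=A^\top(\operatorname{Id}-B)^{-\top}\in\mathbb{R}^{m\times d}$, $\operatorname{PA}(Y):=\{j:\beta^*_j\neq 0\}$, and $\mathcal{B}:=\{\beta\in\mathbb{R}^d : \operatorname{Cov}(I,X)\beta=\operatorname{Cov}(I,Y)\}$. Consider the assumptions (A1) $\operatorname{rank}(C_{\operatorname{PA}(Y)})=|\operatorname{PA}(Y)|$; (A2) for all $S\subseteq\{1,\dots,d\}$: if $\operatorname{rank}(C_S)\le\operatorname{rank}(C_{\operatorname{PA}(Y)})$ and $\operatorname{im}(C_S)\neq\operatorname{im}(C_{\operatorname{PA}(Y)})$, then $C_S w\neq C_{\operatorname{PA}(Y)}\beta^*_{\operatorname{PA}(Y)}$ for all $w\in\mathbb{R}^{|S|}$; (A3) for all $S\subseteq\{1,\dots,d\}$ with $|S|=|\operatorname{PA}(Y)|$ and $S\neq\operatorname{PA}(Y)$, $\operatorname{im}(C_S)\neq\operatorname{im}(C_{\operatorname{PA}(Y)})$.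 If (A1) and (A2) hold, then $\beta^*$ is a solution of $\min_{\beta\in\mathcal{B}}\|\beta\|_0$. If in addition (A3) holds, then $\beta^*$ is the unique solution of this problem.
   Context: For a matrix $D\in\mathbb{R}^{m\times d}$ and $S\subseteq\{1,\dots,d\}$, $D_S$ is the $m\times|S|$ submatrix consisting of the columns indexed by $S$, and $\operatorname{im}(D)$ is the image (column space) of $D$. For a vector $v$, $v_S$ is the subvector indexed by $S$. $\|\beta\|_0$ is the number of non-zero entries of $\beta$. All covariances involved are assumed to exist. *)

(* Defs.v *)
From HB Require Import structures.
From mathcomp Require Import all_boot all_order all_algebra.
From mathcomp Require Import all_classical all_reals all_analysis.
Set Implicit Arguments. Unset Strict Implicit. Unset Printing Implicit Defensive.
Import Order.TTheory GRing.Theory Num.Theory.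
Local Open Scope ring_scope.
Local Open Scope classical_set_scope.

(* Column vectors 'cV[R]_n carry the product sigma-algebra generated by the
   coordinate projections (same construction as the library's instance on
   n.-tuple T). *)
Section measurable_cV.
Context {d} {T : sigmaRingType d}.
Variable n : nat.
Let coors : 'I_n -> 'cV[T]_n -> T := fun i x => x i ord0.
Let cV_set0 : g_sigma_preimage coors set0.
Proof. exact: sigma_algebra0. Qed.
Let cV_setC A : g_sigma_preimage coors A -> g_sigma_preimage coors (~` A).
Proof. exact: sigma_algebraC. Qed.
Let cV_bigcup (F : _^nat) : (forall i, g_sigma_preimage coors (F i)) ->
  g_sigma_preimage coors (\bigcup_i (F i)).
Proof. exact: sigma_algebra_bigcup. Qed.
HB.instance Definition _ := @isMeasurable.Build (measure_tuple_display d)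
  'cV[T]_n (g_sigma_preimage coors) cV_set0 cV_setC cV_bigcup.
End measurable_cV.

Definition mutually_independent4 {d} {T : measurableType d} {R : realType}
  (P : probability T R)
  {d1 d2 d3 d4} {T1 : measurableType d1} {T2 : measurableType d2}
  {T3 : measurableType d3} {T4 : measurableType d4}
  (X1 : T -> T1) (X2 : T -> T2) (X3 : T -> T3) (X4 : T -> T4) : Prop :=
  forall (A1 : set T1) (A2 : set T2) (A3 : set T3) (A4 : set T4),
    measurable A1 -> measurable A2 -> measurable A3 -> measurable A4 ->
    P (X1 @^-1` A1 `&` X2 @^-1` A2 `&` X3 @^-1` A3 `&` X4 @^-1` A4) =
    (P (X1 @^-1` A1) * P (X2 @^-1` A2) * P (X3 @^-1` A3) * P (X4 @^-1` A4))%E.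

Definition covmx {d} {T : measurableType d} {R : realType} (P : probability T R)
  {m n} (U : T -> 'cV[R]_m) (V : T -> 'cV[R]_n) : 'M[R]_(m, n) :=
  \matrix_(i, j) fine (covariance P (fun w => U w i 0) (fun w => V w j 0)).

Definition covvec {d} {T : measurableType d} {R : realType} (P : probability T R)
  {m} (U : T -> 'cV[R]_m) (Y : T -> R) : 'cV[R]_m :=
  \col_i fine (covariance P (fun w => U w i 0) Y).

(* D_S : columns of D indexed by S (in increasing order). *)
Definition cols {R : Type} {m n} (D : 'M[R]_(m, n)) (S : {set 'I_n}) : 'M[R]_(m, #|S|) :=
  \matrix_(i, k) D i (enum_val k).

Definition subv {R : Type} {n} (v : 'cV[R]_n) (S : {set 'I_n}) : 'cV[R]_#|S| :=
  \col_k v (enum_val k) 0.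

Definition l0norm {R : ringType} {n} (b : 'cV[R]_n) : nat := #|[set j | b j 0 != 0]%SET|.

Definition l0_solution {R : ringType} {n} (Bset : 'cV[R]_n -> Prop) (b : 'cV[R]_n) : Prop :=
  Bset b /\ forall b', Bset b' -> (l0norm b <= l0norm b')%N.

Definition l0_unique_solution {R : ringType} {n} (Bset : 'cV[R]_n -> Prop) (b : 'cV[R]_n) : Prop :=
  l0_solution Bset b /\ forall b', l0_solution Bset b' -> b' = b.

(* Main.v *)
Require Import Defs.
From HB Require Import structures.
From mathcomp Require Import all_boot all_order all_algebra.
From mathcomp Require Import all_classical all_reals all_analysis.
From mathcomp Require Import measurable_realfun.
Import Order.TTheory GRing.Theory Num.Theory.
Local Open Scope ring_scope.
Local Open Scope classical_set_scope.
From mathcomp Require Import ring.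
Section indep_pair.
Local Open Scope ereal_scope.
Context d (T : measurableType d) (R : realType) (P : probability T R).
Context d1 d2 d3 (T1 : measurableType d1) (T2 : measurableType d2) (T3 : measurableType d3).
Variables (U : T -> T1) (V1 : T -> T2) (V2 : T -> T3).
Hypotheses (mU : measurable_fun setT U) (mV1 : measurable_fun setT V1)
  (mV2 : measurable_fun setT V2).
Hypothesis h3 : forall A A2 A3, measurable A -> measurable A2 -> measurable A3 ->
  P (U @^-1` A `&` V1 @^-1` A2 `&` V2 @^-1` A3) =
  P (U @^-1` A) * P (V1 @^-1` A2) * P (V2 @^-1` A3).
Let V := fun w => (V1 w, V2 w).
Let mV : measurable_fun setT V.
Proof. exact: measurable_fun_pair. Qed.
HB.instance Definition _ := isMeasurableFun.Build _ _ _ _ V mV.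
Variables (A : set T1) (mA : measurable A).
Let mUA : measurable (U @^-1` A).
Proof. by rewrite -[X in measurable X]setTI; exact: mU. Qed.
Let mVD D : measurable D -> measurable (V @^-1` D).
Proof. by move=> mD; rewrite -[X in measurable X]setTI; exact: mV. Qed.
Let m1 (D : set (T2 * T3)) := P (U @^-1` A `&` V @^-1` D).
Let m1_0 : m1 set0 = 0.
Proof. by rewrite /m1 preimage_set0 setI0 measure0. Qed.
Let m1_ge0 D : 0 <= m1 D.
Proof. exact: measure_ge0. Qed.
Let m1_sigma : semi_sigma_additive m1.
Proof.
move=> F mF tF mUF; rewrite /m1 preimage_bigcup setI_bigcupr.
apply: measure_semi_sigma_additive.
- by move=> n; apply: measurableI => //; exact: mVD.
- apply/trivIsetP => /= i j _ _ ij.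
  rewrite setIACA setIid -preimage_setI.
  by move/trivIsetP : tF => /(_ _ _ Logic.I Logic.I ij) ->; rewrite preimage_set0 setI0.
- rewrite -setI_bigcupr -preimage_bigcup; apply: measurableI => //; exact: mVD.
Qed.
HB.instance Definition _ := isMeasure.Build _ _ _ m1 m1_0 m1_ge0 m1_sigma.
Let c : {nonneg R} := NngNum (fine_ge0 (measure_ge0 P (U @^-1` A))).
Let m2 := mscale c (distribution P V).

Lemma indep_pair_aux D : measurable D -> m1 D = m2 D.
Proof.
move=> mD.
apply: (measure_unique [set A2 `*` A3 | A2 in measurable & A3 in measurable]
  (fun _ => setT)) => //.
- exact: measurable_prod_measurableType.
- move=> _ _ [X1 mX1 [Y1 mY1 <-]] [X2 mX2 [Y2 mY2 <-]].
  rewrite -setXI; exists (X1 `&` X2); first exact: measurableI.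
  by exists (Y1 `&` Y2) => //; exact: measurableI.
- by move=> _; exists setT => //; exists setT => //; rewrite setXTT.
- by rewrite bigcup_const.
- move=> _ [A2 mA2 [A3 mA3 <-]].
  transitivity (P (U @^-1` A `&` (V1 @^-1` A2 `&` V2 @^-1` A3))); first by [].
  transitivity (c%:num%:E * P (V1 @^-1` A2 `&` V2 @^-1` A3)); last by [].
  rewrite setIA h3 // fineK; last exact: fin_num_measure.
  have := h3 setT A2 A3 measurableT mA2 mA3.
  rewrite preimage_setT setTI probability_setT mul1e => ->.
  by rewrite muleA.
- by move=> _; rewrite /m1 (le_lt_trans (probability_le1 _ _)) ?ltry //; apply: measurableI => //; exact: mVD.
Qed.
End indep_pair.

Lemma indep_pair d (T : measurableType d) (R : realType) (P : probability T R)
  d1 d2 d3 (T1 : measurableType d1) (T2 : measurableType d2) (T3 : measurableType d3)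
  (U : T -> T1) (V1 : T -> T2) (V2 : T -> T3) :
  measurable_fun setT U -> measurable_fun setT V1 -> measurable_fun setT V2 ->
  (forall A A2 A3, measurable A -> measurable A2 -> measurable A3 ->
  P (U @^-1` A `&` V1 @^-1` A2 `&` V2 @^-1` A3) =
  (P (U @^-1` A) * P (V1 @^-1` A2) * P (V2 @^-1` A3))%E) ->
  forall A D, measurable A -> measurable D ->
  P (U @^-1` A `&` (fun w => (V1 w, V2 w)) @^-1` D) =
  (P (U @^-1` A) * P ((fun w => (V1 w, V2 w)) @^-1` D))%E.
Proof.
move=> mU mV1 mV2 h3 A D mA mD.
have := @indep_pair_aux _ _ _ P _ _ _ _ _ _ _ _ _ mU mV1 mV2 h3 _ mA _ mD.
have mUA : measurable (U @^-1` A) by rewrite -[X in measurable X]setTI; exact: mU.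
by move=> ->; rewrite /mscale /= fineK // fin_num_measure.
Qed.
Section indep2.
Local Open Scope ereal_scope.
Context d (T : measurableType d) (R : realType) (P : probability T R).
Variables (X Z : T -> R).
Hypotheses (mX : measurable_fun setT X) (mZ : measurable_fun setT Z).
Hypotheses (X2 : X \in Lfun P 2%:E) (Z2 : Z \in Lfun P 2%:E).
Hypothesis hind : forall A D, measurable A -> measurable D ->
  P (X @^-1` A `&` Z @^-1` D) = P (X @^-1` A) * P (Z @^-1` D).
HB.instance Definition _ := isMeasurableFun.Build _ _ _ _ X mX.
HB.instance Definition _ := isMeasurableFun.Build _ _ _ _ Z mZ.
Let XZ := fun w => (X w, Z w).
Let mXZ : measurable_fun setT XZ.
Proof. exact: measurable_fun_pair. Qed.
HB.instance Definition _ := isMeasurableFun.Build _ _ _ _ XZ mXZ.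
Let mu := distribution P X.
Let nu := distribution P Z.
Let J := distribution P XZ.
Let f := fun p : R * R => (p.1 * p.2)%:E.
Let mf : measurable_fun [set: (R * R)%type] f.
Proof.
apply: measurableT_comp => //; apply: measurable_funM => //.
Qed.

Let J_eq S : measurable S -> (mu \x nu) S = J S.
Proof.
apply: product_measure_unique => A B mA mB.
by rewrite /J /distribution /pushforward -hind.
Qed.

Let Pfin : P setT \is a fin_num.
Proof. exact: fin_num_measure. Qed.

Let intXZ : P.-integrable setT (EFin \o (X \* Z)%R).
Proof. by apply/Lfun1_integrable; exact: Lfun2_mul_Lfun1. Qed.

Let intX : P.-integrable setT (EFin \o X).
Proof. by apply/Lfun1_integrable; exact: Lfun_subset12. Qed.

Let intZ : P.-integrable setT (EFin \o Z).
Proof. by apply/Lfun1_integrable; exact: Lfun_subset12. Qed.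

Let intf : (mu \x nu).-integrable setT f.
Proof.
apply/integrableP; split => //.
rewrite (eq_measure_integral J); last by move=> S mS _; exact: J_eq.
rewrite ge0_integral_distribution//; last exact: measurableT_comp.
by move/integrableP : intXZ => [].
Qed.

Lemma indep_expectationM : 'E_P[X \* Z] = 'E_P[X] * 'E_P[Z].
Proof.
rewrite !unlock.
transitivity (\int[J]_p f p).
  by rewrite integral_distribution.
rewrite (eq_measure_integral (mu \x nu)); last by move=> S mS _; symmetry; apply: J_eq.
rewrite -integral12_prod_meas1 //.
have intnu : nu.-integrable setT (EFin \o id).
  by apply: integrable_pushforward => //; exact: measurableT_comp.
have cZ : \int[nu]_y (y%:E) = \int[P]_w (Z w)%:E.
  by rewrite integral_distribution.
have intmu : mu.-integrable setT (EFin \o id).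
  by apply: integrable_pushforward => //; exact: measurableT_comp.
have cX : \int[mu]_y (y%:E) = \int[P]_w (X w)%:E.
  by rewrite integral_distribution.
have finZ : \int[P]_w (Z w)%:E \is a fin_num.
  exact: integrable_fin_num.
transitivity (\int[mu]_x (x%:E * (fine (\int[P]_w (Z w)%:E))%:E)).
  apply: eq_integral => x _.
  rewrite /fubini_F /f /=.
  under eq_integral do rewrite EFinM.
  by rewrite integralZl// cZ fineK.
by rewrite integralZr// cX fineK.
Qed.
End indep2.
Lemma indep_cov0 d (T : measurableType d) (R : realType) (P : probability T R)
  d1 d2 d3 (T1 : measurableType d1) (T2 : measurableType d2) (T3 : measurableType d3)
  (U : T -> T1) (V1 : T -> T2) (V2 : T -> T3) (f : T1 -> R) (k : T2 * T3 -> R) :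
  measurable_fun setT U -> measurable_fun setT V1 -> measurable_fun setT V2 ->
  (forall A A2 A3, measurable A -> measurable A2 -> measurable A3 ->
  P (U @^-1` A `&` V1 @^-1` A2 `&` V2 @^-1` A3) =
  (P (U @^-1` A) * P (V1 @^-1` A2) * P (V2 @^-1` A3))%E) ->
  measurable_fun setT f -> measurable_fun setT k ->
  (fun w => f (U w)) \in Lfun P 2%:E -> (fun w => k (V1 w, V2 w)) \in Lfun P 2%:E ->
  covariance P (fun w => f (U w)) (fun w => k (V1 w, V2 w)) = 0%E.
Proof.
move=> mU mV1 mV2 h3 mf mk X2 Z2.
have Pfin : P setT \is a fin_num by exact: fin_num_measure.
have mV : measurable_fun setT (fun w => (V1 w, V2 w)) by exact: measurable_fun_pair.
have mX : measurable_fun setT (fun w => f (U w)) by exact: measurableT_comp.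
have mZ : measurable_fun setT (fun w => k (V1 w, V2 w)).
  exact: (measurableT_comp mk mV).
rewrite covarianceE; last 3 first.
- exact: Lfun_subset12 X2.
- exact: Lfun_subset12 Z2.
- exact: Lfun2_mul_Lfun1.
rewrite (@indep_expectationM _ _ _ P _ _ mX mZ X2 Z2).
  rewrite subee // fin_numM // expectation_fin_num //; exact: Lfun_subset12.
move=> A D mA mD.
have mfA : measurable (f @^-1` A) by rewrite -[X in measurable X]setTI; exact: mf.
have mkD : measurable (k @^-1` D) by rewrite -[X in measurable X]setTI; exact: mk.
exact: (@indep_pair _ _ _ P _ _ _ _ _ _ U V1 V2 mU mV1 mV2 h3 _ _ mfA mkD).
Qed.
Lemma L2D d (T : measurableType d) (R : realType) (P : probability T R) (f g : T -> R) :
  f \in Lfun P 2%:E -> g \in Lfun P 2%:E -> (f \+ g)%R \in Lfun P 2%:E.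
Proof.
have p1 : (1 <= (2%:E : \bar R))%E by rewrite lee1n.
move=> hf hg; exact: ((Lfun_addr_closed P p1).2 f g hf hg).
Qed.

Lemma L2B d (T : measurableType d) (R : realType) (P : probability T R) (f g : T -> R) :
  f \in Lfun P 2%:E -> g \in Lfun P 2%:E -> (f \- g)%R \in Lfun P 2%:E.
Proof. by move=> hf hg; apply: L2D => //; rewrite rpredN. Qed.

Lemma cov_sum d (T : measurableType d) (R : realType) (P : probability T R)
  (U : T -> R) n (c : 'I_n -> R) (V : 'I_n -> T -> R) :
  U \in Lfun P 2%:E -> (forall k, V k \in Lfun P 2%:E) ->
  (fun w => \sum_(k < n) c k * V k w) \in Lfun P 2%:E /\
  covariance P U (fun w => \sum_(k < n) c k * V k w) =
    (\sum_(k < n) c k * fine (covariance P U (V k)))%:E.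
Proof.
move=> U2; elim: n c V => [|n IH] c V VL2.
  have -> : (fun w => \sum_(k < 0) c k * V k w) = cst 0.
    by apply/funext => w; rewrite big_ord0.
  by split; [exact: Lfun_cst|rewrite covariance_cst_r big_ord0].
have [S2 covS] := IH (fun k => c (widen_ord (leqnSn n) k))
  (fun k => V (widen_ord (leqnSn n) k)) (fun k => VL2 _).
have Pfin : P setT \is a fin_num by exact: fin_num_measure.
have Vm2 := VL2 ord_max.
have -> : (fun w => \sum_(k < n.+1) c k * V k w) =
  ((fun w => \sum_(k < n) c (widen_ord (leqnSn n) k) * V (widen_ord (leqnSn n) k) w)
    \+ (c ord_max \o* V ord_max))%R.
  by apply: funext => w; rewrite big_ord_recr /= [c ord_max * _]mulrC.
have Z2 : (c ord_max \o* V ord_max)%R \in Lfun P 2%:E.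
  by apply: Lfun_scale Vm2; rewrite ler1n.
split; first exact: L2D.
rewrite covarianceDr // covS covarianceZr //; last 3 first.
- exact: Lfun_subset12.
- exact: Lfun_subset12.
- exact: Lfun2_mul_Lfun1.
rewrite -[covariance P U (V ord_max)]fineK; last first.
  apply: covariance_fin_num; [exact: Lfun_subset12|exact: Lfun_subset12|exact: Lfun2_mul_Lfun1].
by rewrite big_ord_recr /= EFinD EFinM.
Qed.
Lemma mul_cols (F : fieldType) m n (C : 'M[F]_(m, n)) (b : 'cV[F]_n) (S : {set 'I_n}) :
  [set j | b j 0 != 0]%SET \subset S -> C *m b = cols C S *m subv b S.
Proof.
move=> sub; apply/matrixP => i k; rewrite !mxE (bigID (mem S)) /=.
rewrite [X in _ + X]big1 ?addr0; last first.
  move=> j jS; have : b j 0 == 0.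
    apply/negPn/negP => bj; move/negP: jS; apply.
    by apply: (fintype.subsetP sub); rewrite inE.
  by rewrite ord1 => /eqP ->; rewrite mulr0.
rewrite big_enum_val; apply: eq_bigr => l _; by rewrite !mxE ord1.
Qed.

Lemma l0_core (F : fieldType) m d (C : 'M[F]_(m, d)) (beta : 'cV[F]_d) :
  let PA : {set 'I_d} := [set j | beta j 0 != 0]%SET in
  \rank (cols C PA) = #|PA| ->
  (forall S : {set 'I_d},
     (\rank (cols C S) <= \rank (cols C PA))%N ->
     ~~ ((cols C S)^T == (cols C PA)^T)%MS ->
     forall w : 'cV[F]_#|S|, cols C S *m w != cols C PA *m subv beta PA) ->
  (forall b, C *m b = C *m beta -> (#|PA| <= l0norm b)%N) /\
  ((forall S : {set 'I_d}, #|S| = #|PA| -> S != PA ->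
      ~~ ((cols C S)^T == (cols C PA)^T)%MS) ->
   forall b, C *m b = C *m beta -> (l0norm b <= #|PA|)%N -> b = beta).
Proof.
move=> PA A1 A2.
have e2 : C *m beta = cols C PA *m subv beta PA by apply: mul_cols.
have part1 : forall b, C *m b = C *m beta -> (#|PA| <= l0norm b)%N.
  move=> b hb; rewrite leqNgt; apply/negP => lt.
  pose S := [set j | b j 0 != 0]%SET.
  have e1 : C *m b = cols C S *m subv b S by apply: mul_cols.
  have rk : (\rank (cols C S) < \rank (cols C PA))%N.
    by rewrite A1; apply: leq_ltn_trans (rank_leq_col _) lt.
  have neq : ~~ ((cols C S)^T == (cols C PA)^T)%MS.
    by apply/negP => /eqmx_rank; rewrite !mxrank_tr => eq; rewrite eq ltnn in rk.
  have := A2 S (ltnW rk) neq (subv b S).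
  by rewrite -e1 hb e2 eqxx.
split => // A3 b hb hle.
have hcard : l0norm b = #|PA| by apply/eqP; rewrite eqn_leq hle part1.
pose S := [set j | b j 0 != 0]%SET.
have SPA : S = PA.
  case: (eqVneq S PA) => // neq.
  have e1 : C *m b = cols C S *m subv b S by apply: mul_cols.
  have rk : (\rank (cols C S) <= \rank (cols C PA))%N.
    by rewrite A1 -hcard; exact: rank_leq_col.
  have := A2 S rk (A3 S hcard neq) (subv b S).
  by rewrite -e1 hb e2 eqxx.
have e1 : C *m b = cols C PA *m subv b PA by apply: mul_cols; rewrite -SPA.
have rf : row_full (cols C PA) by rewrite /row_full A1.
have [B0 hB0] := row_fullP rf.
have es : subv b PA = subv beta PA.
  by rewrite -(mul1mx (subv b PA)) -hB0 -mulmxA -e1 hb e2 mulmxA hB0 mul1mx.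
apply/matrixP => j k; rewrite ord1.
case: (boolP (j \in PA)) => jPA.
  have := congr1 (fun v : 'cV[F]__ => v (enum_rank_in jPA j) 0) es.
  by rewrite !mxE enum_rankK_in.
have jS : j \notin S by rewrite SPA.
move: jPA jS; rewrite !inE !negbK => /eqP -> /eqP ->.
by [].
Qed.
Lemma measurable_coord (R : realType) n (j : 'I_n) :
  measurable_fun setT (fun x : 'cV[R]_n => x j 0).
Proof.
move=> _ Y mY; rewrite setTI; apply: sub_sigma_algebra => /=.
rewrite -bigcup_seq/=; exists j => /=; first by rewrite mem_index_enum.
by exists Y => //; rewrite setTI.
Qed.
Theorem theorem1 (R : realType) (dT : measure_display) (T : measurableType dT)
  (P : probability T R) (d m q : nat)
  (dX dY : measure_display) (EX : measurableType dX) (EY : measurableType dY)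
  (B : 'M[R]_d) (A : 'M[R]_(d, m)) (beta : 'cV[R]_d)
  (h : 'cV[R]_q -> EX -> 'cV[R]_d) (g : 'cV[R]_q -> EY -> R)
  (X : T -> 'cV[R]_d) (Y : T -> R) (H : T -> 'cV[R]_q) (I : T -> 'cV[R]_m)
  (epsX : T -> EX) (epsY : T -> EY) :
  (1%:M - B) \in unitmx ->
  measurable_fun setT (fun p : 'cV[R]_q * EX => h p.1 p.2) ->
  measurable_fun setT (fun p : 'cV[R]_q * EY => g p.1 p.2) ->
  measurable_fun setT I -> measurable_fun setT H ->
  measurable_fun setT epsX -> measurable_fun setT epsY ->
  mutually_independent4 P I H epsX epsY ->
  (forall w, X w = B *m X w + A *m I w + h (H w) (epsX w)) ->
  (forall w, Y w = ((X w)^T *m beta) 0 0 + g (H w) (epsY w)) ->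
  (forall i, (fun w => I w i 0) \in Lfun P 2%:E) ->
  (forall j, (fun w => X w j 0) \in Lfun P 2%:E) ->
  Y \in Lfun P 2%:E ->
  covmx P I I \in unitmx ->
  let C : 'M[R]_(m, d) := A^T *m (invmx (1%:M - B))^T in
  let PA : {set 'I_d} := [set j | beta j 0 != 0]%SET in
  let Bset : 'cV[R]_d -> Prop := fun b => covmx P I X *m b = covvec P I Y in
  (* (A1) *)
  \rank (cols C PA) = #|PA| ->
  (* (A2) *)
  (forall S : {set 'I_d},
     (\rank (cols C S) <= \rank (cols C PA))%N ->
     ~~ ((cols C S)^T == (cols C PA)^T)%MS ->
     forall w : 'cV[R]_#|S|, cols C S *m w != cols C PA *m subv beta PA) ->
  l0_solution Bset beta /\
  ((* (A3) *)
   (forall S : {set 'I_d}, #|S| = #|PA| -> S != PA ->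
      ~~ ((cols C S)^T == (cols C PA)^T)%MS) ->
   l0_unique_solution Bset beta).
Proof.
move=> hinv mh mg mI mH meX meY hind hX hY I2 X2 Y2 hcovI C PA Bset A1 A2.
have Pfin : P setT \is a fin_num by exact: fin_num_measure.
have h3X : forall A A2 A3, measurable A -> measurable A2 -> measurable A3 ->
    P (I @^-1` A `&` H @^-1` A2 `&` epsX @^-1` A3) =
    (P (I @^-1` A) * P (H @^-1` A2) * P (epsX @^-1` A3))%E.
  move=> A0 A20 A30 mA0 mA20 mA30.
  have := hind A0 A20 A30 setT mA0 mA20 mA30 measurableT.
  by rewrite preimage_setT setIT probability_setT mule1.
have h3Y : forall A A2 A3, measurable A -> measurable A2 -> measurable A3 ->
    P (I @^-1` A `&` H @^-1` A2 `&` epsY @^-1` A3) =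
    (P (I @^-1` A) * P (H @^-1` A2) * P (epsY @^-1` A3))%E.
  move=> A0 A20 A30 mA0 mA20 mA30.
  have := hind A0 A20 setT A30 mA0 mA20 measurableT mA30.
  by rewrite preimage_setT setIT probability_setT mule1.
pose cvX i k := fine (covariance P (fun w => I w i 0) (fun w => X w k 0)).
pose cvI i l := fine (covariance P (fun w => I w i 0) (fun w => I w l 0)).
have fin_cov : forall U V : T -> R, U \in Lfun P 2%:E -> V \in Lfun P 2%:E ->
    covariance P U V = (fine (covariance P U V))%:E.
  move=> U V U2 V2; rewrite fineK //; apply: covariance_fin_num;
    [exact: Lfun_subset12|exact: Lfun_subset12|exact: Lfun2_mul_Lfun1].
have key : forall i j, cvX i j =
    \sum_(k < d) B j k * cvX i k + \sum_(l < m) A j l * cvI i l.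
  move=> i j; rewrite /cvX /cvI.
  have [SB2 covSB] := @cov_sum _ _ _ P _ _ (fun k => B j k) (fun k w => X w k 0) (I2 i) X2.
  have [SA2 covSA] := @cov_sum _ _ _ P _ _ (fun l => A j l) (fun l w => I w l 0) (I2 i) I2.
  have hhE : (fun w => h (H w) (epsX w) j 0) =
      (((fun w => X w j 0) \- (fun w => \sum_(k < d) B j k * X w k 0))
        \- (fun w => \sum_(l < m) A j l * I w l 0))%R.
    apply: funext => w /=.
    have e : X w j 0 = \sum_(k < d) B j k * X w k 0 +
        \sum_(l < m) A j l * I w l 0 + h (H w) (epsX w) j 0.
      by rewrite {1}(hX w) !mxE.
    rewrite e; ring.
  have hh2 : (fun w => h (H w) (epsX w) j 0) \in Lfun P 2%:E.
    by rewrite hhE; apply: L2B => //; apply: L2B.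
  have c0 : covariance P (fun w => I w i 0) (fun w => h (H w) (epsX w) j 0) = 0%E.
    apply: (@indep_cov0 _ _ _ P _ _ _ _ _ _ I H epsX
      (fun x : 'cV[R]_m => x i 0) (fun p => h p.1 p.2 j 0)) => //.
    - exact: measurable_coord.
    - exact: (measurableT_comp (@measurable_coord R d j) mh).
  move: c0; rewrite hhE covarianceBr //; last exact: L2B.
  rewrite covarianceBr // covSB covSA fin_cov // -!EFinB => /(congr1 fine) /=.
  move/eqP; rewrite subr_eq0 subr_eq => /eqP ->.
  by rewrite addrC.
have F1' : covmx P I X *m (1%:M - B)^T = covmx P I I *m A^T.
  rewrite linearB /= trmx1 mulmxBr mulmx1.
  apply/matrixP => i j; rewrite !mxE.
  have := key i j; rewrite /cvX /cvI => ->.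
  rewrite addrAC.
  have -> : \sum_(k < d) B j k * fine (covariance P (fun w => I w i 0) (fun w => X w k 0)) =
    \sum_(k < d) covmx P I X i k * B^T k j.
    by apply: eq_bigr => k _; rewrite !mxE mulrC.
  rewrite subrr add0r; apply: eq_bigr => l _; rewrite !mxE mulrC.
  by [].
have F1 : covmx P I X = covmx P I I *m C.
  have u : (1%:M - B)^T \in unitmx by rewrite unitmx_tr.
  by rewrite /C trmx_inv mulmxA -F1' mulmxK.
have F2 : covvec P I Y = covmx P I X *m beta.
  apply/matrixP => i z; rewrite ord1 !mxE.
  have [SY2 covSY] := @cov_sum _ _ _ P _ _ (fun k => beta k 0) (fun k w => X w k 0) (I2 i) X2.
  have ggE : (fun w => g (H w) (epsY w)) =
      (Y \- (fun w => \sum_(k < d) beta k 0 * X w k 0))%R.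
    apply: funext => w /=.
    have e : Y w = \sum_(k < d) beta k 0 * X w k 0 + g (H w) (epsY w).
      rewrite {1}(hY w) !mxE; congr (_ + _); apply: eq_bigr => k _.
      by rewrite !mxE mulrC.
    rewrite e; ring.
  have gg2 : (fun w => g (H w) (epsY w)) \in Lfun P 2%:E.
    by rewrite ggE; apply: L2B.
  have c0 : covariance P (fun w => I w i 0) (fun w => g (H w) (epsY w)) = 0%E.
    apply: (@indep_cov0 _ _ _ P _ _ _ _ _ _ I H epsY
      (fun x : 'cV[R]_m => x i 0) (fun p => g p.1 p.2)) => //.
    exact: measurable_coord.
  move: c0; rewrite ggE covarianceBr // covSY (fin_cov _ Y) // -EFinB.
  move=> /(congr1 fine) /= /eqP; rewrite subr_eq0 => /eqP ->.
  by apply: eq_bigr => k _; rewrite !mxE mulrC.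
have BsetE : forall b, Bset b <-> C *m b = C *m beta.
  move=> b; rewrite /Bset F2 F1 -!mulmxA; split; last by move=> ->.
  by move=> e; have := congr1 (mulmx (invmx (covmx P I I))) e; rewrite !mulKmx.
have [p1 p2] := @l0_core _ _ _ C beta A1 A2.
split.
  split; first exact/BsetE.
  by move=> b' /BsetE hb'; exact: p1.
move=> A3; split.
  split; first exact/BsetE.
  by move=> b' /BsetE hb'; exact: p1.
move=> b' [hb' hmin].
apply: p2 => //; first exact/BsetE.
apply: hmin; exact/BsetE.
Qed.
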